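(* Let $\Bbbk$ be an algebraically closed field of characteristic zero and $n\ge 2$. Consider $A=\Bbbk[x]/(x^n)$ with the Frobenius structure determined by $\Delta(1)=\sum_{i=0}^{n-1}x^i\otimes x^{n-1-i}$ (so $\Delta(a)=(a\otimes1)\Delta(1)$) and counit $\varepsilon(x^{n-1})=1$, $\varepsilon(x^j)=0$ for $j<n-1$. Then: (a) if $n$ is even, $A$ admits no extended structure; (b) if $n$ is odd, the extended structures on $A$ are exactly $\phi=\mathrm{id}_A$ together with $\theta=\pm\sqrt n\,x^{(n-1)/2}+\sum_{j=(n+1)/2}^{n-1}\theta_jx^j$ for arbitrary $\theta_{(n+1)/2},\dots,\theta_{n-1}\in\Bbbk$.
   Context: A Frobenius algebra over $\Bbbk$ is a tuple $(A,m,u,\Delta,\varepsilon)$ where $(A,m,u)$ is an associative unital algebra and $(A,\Delta,\varepsilon)$ is a coassociative counital coalgebra satisfying $(a\otimes 1_A)\Delta(b)=\Delta(ab)=\Delta(a)(1_A\otimes b)$. A Frobenius algebra morphism is both an algebra and coalgebra morphism. An extended structure on $A$ is a pair $(\phi,\theta)$, $\phi:A\to A$ linear, $\theta\in A$, with: (i) $\phi$ a Frobenius algebra morphism with $\phi^2=\mathrm{id}_A$; (ii) $\phi(\theta a)=\theta a$ for all $a\in A$; (iii) $m(\phi\otimes\mathrm{id}_A)\Delta(1_A)=\theta^2$. *)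

(* Defs.v *)
From HB Require Import structures.
From mathcomp Require Import all_boot all_order all_algebra.
Set Implicit Arguments. Unset Strict Implicit. Unset Printing Implicit Defensive.
Import Order.TTheory GRing.Theory Num.Theory.
Local Open Scope ring_scope.

(* A = K[x]/(x^n), an element a is represented by its coefficient row vector
   a : 'rV[K]_n, with a 0 i the coefficient of x^i.
   A (x) A is represented by 'M[K]_n : T i j is the coefficient of x^i (x) x^j. *)
Section Truncated.
Variables (K : fieldType) (n : nat).

(* the basis element x^i (zero if i >= n) *)
Definition xpow (i : nat) : 'rV[K]_n := \row_(k < n) (k == i :> nat)%:R.

Definition tmul (a b : 'rV[K]_n) : 'rV[K]_n :=
  \row_(k < n) \sum_(i < n) \sum_(j < n | (i + j)%N == k) a 0 i * b 0 j.

Definition tone : 'rV[K]_n := xpow 0.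

Definition tensor (a b : 'rV[K]_n) : 'M[K]_n := a^T *m b.

Definition tmap (f g : 'rV[K]_n -> 'rV[K]_n) (T : 'M[K]_n) : 'M[K]_n :=
  \sum_(i < n) \sum_(j < n) T i j *: tensor (f (xpow i)) (g (xpow j)).

Definition tm (T : 'M[K]_n) : 'rV[K]_n :=
  \sum_(i < n) \sum_(j < n) T i j *: tmul (xpow i) (xpow j).

Definition Delta1 : 'M[K]_n := \sum_(i < n) tensor (xpow i) (xpow (n.-1 - i)).

Definition Delta (a : 'rV[K]_n) : 'M[K]_n := tmap (tmul a) id Delta1.

Definition eps (a : 'rV[K]_n) : K := \sum_(i < n | (i : nat) == n.-1) a 0 i.

Definition frob_morph (phi : 'rV[K]_n -> 'rV[K]_n) : Prop :=
  [/\ forall a b, phi (tmul a b) = tmul (phi a) (phi b),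
      phi tone = tone,
      forall a, Delta (phi a) = tmap phi phi (Delta a) &
      forall a, eps (phi a) = eps a].

Definition extended_structure (phi : {linear 'rV[K]_n -> 'rV[K]_n})
    (theta : 'rV[K]_n) : Prop :=
  [/\ frob_morph phi,
      forall a, phi (phi a) = a,
      forall a, phi (tmul theta a) = tmul theta a &
      tm (tmap phi id Delta1) = tmul theta theta].

End Truncated.
Arguments xpow {K n}.
Arguments tone {K n}.
Arguments Delta1 {K n}.

(* Main.v *)
Require Import Defs.
From HB Require Import structures.
From mathcomp Require Import all_boot all_order all_algebra all_field ring.
Import GRing.Theory.
Local Open Scope ring_scope.

Section Infra.
Variables (K : fieldType) (n : nat).
Local Notation rV := 'rV[K]_n.

Definition rho (p : {poly K}) : rV := \row_(k < n) p`_k.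
Definition sig (a : rV) : {poly K} := \sum_(i < n) a 0 i *: 'X^i.

Lemma rho_is_linear : linear rho.
Proof. by move=> c p q; apply/rowP=> k; rewrite !mxE coefD coefZ. Qed.
HB.instance Definition _ := GRing.isLinear.Build K {poly K} rV _ rho rho_is_linear.

Lemma rho_sig a : rho (sig a) = a.
Proof.
apply/rowP=> k; rewrite !mxE coef_sum (bigD1 k) //= big1 ?addr0.
  by rewrite coefZ coefXn eqxx mulr1.
by move=> j jk; rewrite coefZ coefXn; case: eqP => [/val_inj e|]; [rewrite e eqxx in jk|rewrite mulr0].
Qed.

Lemma rhoE p k : rho p 0 k = p`_k.
Proof. by rewrite mxE. Qed.

Lemma rhoP p q : rho p = rho q <-> (forall k, (k < n)%N -> p`_k = q`_k).
Proof.
split=> [e k kn|e]; last by apply/rowP=> k; rewrite !mxE e.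
by move/rowP: e => /(_ (Ordinal kn)); rewrite !mxE.
Qed.

Lemma xpowE i : xpow i = rho 'X^i.
Proof. by apply/rowP=> k; rewrite !mxE coefXn. Qed.

Lemma toneE : tone = rho 1.
Proof. by rewrite /tone xpowE expr0. Qed.

Lemma tmulE p q : tmul (rho p) (rho q) = rho (p * q).
Proof.
apply/rowP=> k; rewrite !mxE coefM.
transitivity (\sum_(i < n) if (i <= k)%N then p`_i * q`_(k - i) else 0).
  apply: eq_bigr => i _; case: ifPn => ik.
    have kin : (k - i < n)%N by apply: leq_ltn_trans (leq_subr _ _) (ltn_ord k).
    rewrite (big_pred1 (Ordinal kin)) ?mxE //= => j /=.
    apply/eqP/eqP=> [e|->]; first by apply/val_inj; rewrite /= -e addKn.
    by rewrite /= subnKC.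
  rewrite big_pred0 // => j; apply/negbTE; apply: contra ik => /eqP <-.
  exact: leq_addr.
rewrite -big_mkcond /=.
by rewrite (big_ord_widen n (fun i => p`_i * q`_(k - i))).
Qed.

Lemma rhoXn_ge m p : (n <= m)%N -> rho ('X^m * p) = 0.
Proof.
move=> nm; apply/rowP=> k; rewrite !mxE coefXnM.
by rewrite (leq_trans (ltn_ord k) nm).
Qed.

Lemma epsE p : (0 < n)%N -> eps (rho p) = p`_n.-1.
Proof.
move=> n0; have hn : (n.-1 < n)%N by rewrite ltn_predL.
by rewrite /eps (big_pred1 (Ordinal hn)) ?mxE.
Qed.

Lemma tensorE (a b : rV) i j : tensor a b i j = a 0 i * b 0 j.
Proof. by rewrite !mxE big_ord1 mxE. Qed.

Lemma row_decomp (a : rV) : a = \sum_(j < n) a 0 j *: xpow j.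
Proof.
apply/rowP=> k; rewrite summxE (bigD1 k) //= big1 ?addr0.
  by rewrite !mxE eqxx mulr1.
by move=> j jk; rewrite !mxE; case: eqP => [e|]; [by move: jk; rewrite (val_inj e) eqxx | rewrite mulr0].
Qed.

Lemma tm_tensor (a b : rV) : tm (tensor a b) = tmul a b.
Proof.
rewrite -{2}(rho_sig a) -{2}(rho_sig b) tmulE /sig mulr_suml linear_sum.
apply: eq_bigr => i _; rewrite mulr_sumr linear_sum; apply: eq_bigr => j _.
by rewrite -scalerAl -scalerAr scalerA linearZ tensorE !xpowE tmulE.
Qed.

Lemma tm_sum (I : finType) (F : I -> 'M[K]_n) : tm (\sum_i F i) = \sum_i tm (F i).
Proof.
rewrite /tm [RHS]exchange_big /=; apply: eq_bigr => i _.
rewrite [RHS]exchange_big /=; apply: eq_bigr => j _.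
by rewrite summxE scaler_suml.
Qed.

Lemma tmapD1 (f : rV -> rV) : tmap f id Delta1 = \sum_(i < n) tensor (f (xpow i)) (xpow (n.-1 - i)).
Proof.
apply: eq_bigr => i _.
have -> : \sum_(j < n) Delta1 i j *: tensor (f (xpow i)) (xpow j)
   = \sum_(j < n) xpow (n.-1 - i) 0 j *: tensor (f (xpow i)) (xpow j).
  apply: eq_bigr => j _; congr (_ *: _).
  rewrite /Delta1 summxE (bigD1 i) //= big1 ?addr0; first by rewrite tensorE !mxE eqxx mul1r.
  by move=> k ki; rewrite tensorE !mxE; case: eqP => [/val_inj e|]; [rewrite e eqxx in ki|rewrite mul0r].
rewrite {2}(row_decomp (xpow (n.-1 - i))) /tensor mulmx_sumr.
by apply: eq_bigr => j _; rewrite scalemxAr.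
Qed.

Lemma tmap_id (T : 'M[K]_n) : tmap id id T = T.
Proof.
rewrite {2}(matrix_sum_delta T); apply: eq_bigr => i _; apply: eq_bigr => j _.
congr (_ *: _); apply/matrixP=> k l; rewrite tensorE !mxE.
by rewrite -natrM mulnb.
Qed.


Definition shiftp (p : {poly K}) w := \poly_(i < size p) p`_(i + w).

Lemma shiftp0 p w : (shiftp p w)`_0 = p`_w.
Proof.
rewrite coef_poly add0n; case: ltnP => // hs.
by rewrite nth_default // (leq_trans hs (leq0n w)).
Qed.

Lemma lowfacE (p : {poly K}) w : (forall k, (k < w)%N -> p`_k = 0) ->
  p = shiftp p w * 'X^w.
Proof.
move=> low; apply/polyP => i; rewrite coefMXn coef_poly.
case: ltnP => iw; first exact: low.
rewrite subnK //; case: ltnP => // hs; rewrite nth_default //.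
exact: leq_trans hs (leq_subr w i).
Qed.

Lemma low_or (p : {poly K}) m :
  (forall k, (k < m)%N -> p`_k = 0) \/
  exists w, [/\ (w < m)%N, p`_w != 0 & forall k, (k < w)%N -> p`_k = 0].
Proof.
elim: m => [|m [IH|IH]]; first by left.
- have [pm|pm] := eqVneq p`_m 0.
  + left => k; rewrite ltnS leq_eqVlt => /orP[/eqP->//|]; exact: IH.
  + by right; exists m; split.
- by right; case: IH => w [wm pw low]; exists w; split => //; exact: ltnW.
Qed.

Lemma rhoD (p q : {poly K}) : rho (p + q) = rho p + rho q.
Proof. by apply/rowP=> k; rewrite !mxE coefD. Qed.
Lemma rho0 : rho 0 = 0.
Proof. by apply/rowP=> k; rewrite !mxE coef0. Qed.
Lemma rhoB (p q : {poly K}) : rho (p - q) = rho p - rho q.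
Proof. by apply/rowP=> k; rewrite !mxE coefB. Qed.
Lemma rhoZ c (p : {poly K}) : rho (c *: p) = c *: rho p.
Proof. by apply/rowP=> k; rewrite !mxE coefZ. Qed.
Lemma rho_sum (I : finType) (P : pred I) (F : I -> {poly K}) :
  rho (\sum_(i | P i) F i) = \sum_(i | P i) rho (F i).
Proof. by apply/rowP=> k; rewrite !mxE coef_sum summxE; apply: eq_bigr => i _; rewrite mxE. Qed.

Lemma rhoM (p q : {poly K}) : rho (p * q) = tmul (rho p) (rho q).
Proof. by rewrite tmulE. Qed.

Lemma rho_congrX (p p' : {poly K}) k : rho p = rho p' -> rho (p ^+ k) = rho (p' ^+ k).
Proof.
move=> e; elim: k => [|k IH]; first by rewrite !expr0.
by rewrite !exprSr !rhoM IH e.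
Qed.

Lemma tmul1 (a : rV) : tmul a tone = a.
Proof. by rewrite -(rho_sig a) toneE tmulE mulr1. Qed.

Lemma sig_coef (a : rV) (k : 'I_n) : (sig a)`_k = a 0 k.
Proof. by rewrite -rhoE rho_sig. Qed.

Section Forward.
Variables (phi : {linear rV -> rV}) (theta : rV).
Hypothesis n2 : (2 <= n)%N.
Hypothesis chr : [pchar K] =i pred0.
Hypothesis Hm : forall a b, phi (tmul a b) = tmul (phi a) (phi b).
Hypothesis H1 : phi tone = tone.
Hypothesis He : forall a, eps (phi a) = eps a.
Hypothesis H3 : tm (tmap phi id Delta1) = tmul theta theta.

Let Y := sig (phi (rho 'X)).
Let T := sig theta.

Let n0 : (0 < n)%N. Proof. exact: leq_trans n2. Qed.
Let natn0 : (n%:R : K) != 0.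
Proof. by have /pcharf0P h := chr; rewrite h -lt0n n0. Qed.

Lemma phiXk k : phi (rho ('X^k)) = rho (Y ^+ k).
Proof.
elim: k => [|k IH]; first by rewrite !expr0 -toneE H1.
by rewrite !exprSr !rhoM Hm IH /Y rho_sig.
Qed.

Lemma S_eq : tm (tmap phi id Delta1) = rho (\sum_(i < n) Y ^+ i * 'X^(n.-1 - i)).
Proof.
rewrite tmapD1 tm_sum rho_sum; apply: eq_bigr => i _.
by rewrite tm_tensor !xpowE phiXk tmulE.
Qed.

Lemma Y0 : Y`_0 = 0.
Proof.
have : rho (Y ^+ n) = 0 by rewrite -phiXk -(mulr1 'X^n) rhoXn_ge // linear0.
move/rowP/(_ (Ordinal n0)); rewrite !mxE /= -[(Y ^+ n)`_0]horner_coef0 horner_exp horner_coef0 => /eqP.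
by rewrite expf_eq0 n0 => /eqP.
Qed.

Let Y1 := shiftp Y 1.
Let c1 := Y1`_0.

Lemma YE : Y = Y1 * 'X.
Proof.
rewrite -['X]expr1; apply: lowfacE => k; rewrite ltnS leqn0 => /eqP ->; exact: Y0.
Qed.

Lemma YkE k : Y ^+ k = Y1 ^+ k * 'X^k.
Proof. by rewrite {1}YE exprMn. Qed.

Let Z := \sum_(i < n) Y1 ^+ i.
Let sc := \sum_(i < n) c1 ^+ i.

Lemma SE : \sum_(i < n) Y ^+ i * 'X^(n.-1 - i) = Z * 'X^(n.-1).
Proof.
rewrite /Z mulr_suml; apply: eq_bigr => i _; rewrite YkE -mulrA -exprD subnKC //.
by rewrite -ltnS prednK.
Qed.

Lemma Z0 : Z`_0 = sc.
Proof.
rewrite -horner_coef0 /Z horner_sum; apply: eq_bigr => i _.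
by rewrite horner_exp horner_coef0.
Qed.

Lemma TT k : (k < n)%N -> (T * T)`_k = if k == n.-1 then sc else 0.
Proof.
move=> kn; have e : tmul theta theta = rho (T * T) by rewrite -tmulE /T rho_sig.
have := H3; rewrite S_eq SE e => /rhoP/(_ k kn) <-.
rewrite coefMXn; case: (ltnP k n.-1) => h; first by rewrite (ltn_eqF h).
have ek : k = n.-1 by apply/eqP; rewrite eqn_leq h andbT -ltnS prednK.
by rewrite ek eqxx subnn Z0.
Qed.

Lemma c1pow : c1 ^+ n.-1 = 1.
Proof.
have := He (rho 'X^(n.-1)); rewrite phiXk !epsE // YkE coefMXn ltnn subnn coefXn eqxx.
by rewrite -horner_coef0 horner_exp horner_coef0.
Qed.

Lemma sc_neq0 : sc != 0.
Proof.
have h := subrX1 c1 n.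
have e : c1 ^+ n = c1 by rewrite -(prednK n0) exprS c1pow mulr1.
rewrite e -/sc in h.
have [c11|c1n1] := eqVneq c1 1.
  rewrite /sc c11; under eq_bigr do rewrite expr1n.
  by rewrite sumr_const card_ord.
have : (c1 - 1) * (sc - 1) = 0 by rewrite mulrBr mulr1 -h subrr.
move/eqP; rewrite mulf_eq0 subr_eq0 (negbTE c1n1) /= subr_eq0 => /eqP ->.
exact: oner_neq0.
Qed.

Lemma Tval : exists w, [/\ n = w.*2.+1, T`_w ^+ 2 = sc, T`_w != 0 &
  forall k, (k < w)%N -> T`_k = 0].
Proof.
have hn1 : (n.-1 < n)%N by rewrite ltn_predL.
case: (low_or T n) => [allz | [w [wn Tw low]]].
  exfalso; have := TT _ hn1; rewrite eqxx coefM big1 => [/esym/eqP|j _].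
    by rewrite (negbTE sc_neq0).
  rewrite allz ?mul0r //; apply: leq_trans (ltn_ord j) _; by rewrite prednK.
have TE : T = shiftp T w * 'X^w by exact: lowfacE.
have TTE : T * T = shiftp T w * shiftp T w * 'X^(w + w).
  by rewrite {1 2}TE exprD mulrACA.
case: (ltnP (w + w) n) => h.
  have := TT _ h; rewrite TTE coefMXn ltnn subnn coef0M shiftp0.
  case: eqP => [e|_ /eqP]; last by rewrite mulf_eq0 orbb (negbTE Tw).
  move=> e2; exists w; split => //; first by rewrite -addnn e prednK.
exfalso; have := TT _ hn1; rewrite eqxx TTE coefMXn.
have -> : (n.-1 < w + w)%N by rewrite (leq_trans _ h) // ltn_predL.
by move/esym/eqP; rewrite (negbTE sc_neq0).
Qed.

Lemma forward_odd : odd n.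
Proof. by have [w [-> _ _ _]] := Tval; rewrite /= odd_double. Qed.

Hypothesis Hinv : forall a, phi (phi a) = a.
Hypothesis Hth : forall a, phi (tmul theta a) = tmul theta a.

Lemma forward_all : (forall a, phi a = a) /\ exists w, [/\ n = w.*2.+1,
   T`_w ^+ 2 = n%:R & forall k, (k < w)%N -> T`_k = 0].
Proof.
have [w [Hn Tw2 Tw Tlow]] := Tval.
have phi_theta : phi theta = theta by have := Hth tone; rewrite tmul1.
have annih a : rho (T * (sig (phi a) - sig a)) = 0.
  have e : tmul theta (phi a) = tmul theta a by rewrite -{1}phi_theta -Hm Hth.
  by rewrite mulrBr rhoB -!tmulE !rho_sig e subrr.
have divX D : rho (T * D) = 0 -> exists r, rho D = rho ('X^(w.+1) * r).
  move=> h0; case: (low_or D w.+1) => [low | [u [uw Du lowu]]].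
    by exists (shiftp D w.+1); rewrite {1}(lowfacE _ _ low) mulrC.
  exfalso.
  have TE : T = shiftp T w * 'X^w by exact: lowfacE.
  have DE : D = shiftp D u * 'X^u by exact: lowfacE.
  have hwu : (w + u < n)%N by rewrite Hn -addnn ltnS leq_add2l.
  rewrite -rho0 in h0; move/rhoP: h0 => /(_ _ hwu).
  have -> : T * D = shiftp T w * shiftp D u * 'X^(w + u).
    by rewrite {1}TE {1}DE exprD mulrACA.
  rewrite coefMXn ltnn subnn coef0M !shiftp0 coef0 => /eqP.
  by rewrite mulf_eq0 (negbTE Tw) (negbTE Du).
have phi_sub a : exists r, phi a = a + rho ('X^(w.+1) * r).
  have [r e] := divX _ (annih a); exists r.
  by rewrite -e rhoB !rho_sig addrC subrK.
have phi_high r : phi (rho ('X^(w.+1) * r)) = rho ('X^(w.+1) * r).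
  have [r1 e1] := phi_sub (rho 'X).
  have eY : rho Y = rho ('X * (1 + 'X^w * r1)).
    by rewrite /Y rho_sig e1 -rhoD exprS; congr rho; ring.
  have eYk : rho (Y ^+ w.+1) = rho ('X^(w.+1)).
    rewrite (rho_congrX _ _ _ eY) exprMn.
    have [s es] : exists s, (1 + 'X^w * r1) ^+ w.+1 = 1 + 'X^w * s.
      exists (r1 * \sum_(i < w.+1) (1 + 'X^w * r1) ^+ i).
      rewrite -(subrK 1 ((1 + 'X^w * r1) ^+ w.+1)) subrX1; ring.
    rewrite es mulrDr mulr1 rhoD mulrA -exprD rhoXn_ge ?addr0 //.
    by rewrite Hn -addnn addSn.
  have [r2 e2] := phi_sub (rho r).
  rewrite {1}rhoM Hm phiXk eYk e2 -rhoD tmulE mulrDr rhoD mulrA -exprD.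
  by rewrite (rhoXn_ge (w.+1 + w.+1)) ?addr0 // Hn -addnn addSn addnS leqnSn.
have phi_id a : phi a = a.
  have [r e] := phi_sub a.
  have := Hinv a; rewrite e linearD phi_high e.
  set E := rho _ => h.
  have h2 : E + E = 0 by apply: (addrI a); rewrite addrA addr0.
  have : (2%:R : K) *: E = 0 by rewrite scaler_nat mulr2n.
  move/eqP; rewrite scaler_eq0 => /orP[|/eqP->]; last by rewrite addr0.
  by have /pcharf0P -> := chr.
split => //; exists w; split => //.
rewrite Tw2.
have c11 : c1 = 1.
  have h1n : (1 < n)%N by [].
  have := sig_coef (phi (rho 'X)) (Ordinal h1n); rewrite -/Y /= phi_id rhoE coefX /=.
  by rewrite YE coefMX /c1.
rewrite /sc c11; under eq_bigr do rewrite expr1n.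
by rewrite sumr_const card_ord.
Qed.

End Forward.

Lemma row_form (theta : rV) w (s : K) :
  (forall k : 'I_n, (k < w)%N -> theta 0 k = 0) ->
  (forall k : 'I_n, k = w :> nat -> theta 0 k = s) ->
  theta = s *: xpow w + \sum_(j < n | (w < j)%N) theta 0 j *: xpow j.
Proof.
move=> low ws; apply/rowP => k; rewrite !mxE summxE.
have -> : \sum_(j < n | (w < j)%N) (theta 0 j *: xpow j) 0 k
   = if (w < k)%N then theta 0 k else 0.
  case: ifP => wk.
    rewrite (bigD1 k) //= big1 => [|j /andP[_ jk]]; first by rewrite !mxE eqxx mulr1 addr0.
    by rewrite !mxE; case: eqP => [e|]; [by move: jk; rewrite (val_inj e) eqxx|rewrite mulr0].
  apply: big1 => j wj; rewrite !mxE; case: eqP => [e|]; last by rewrite mulr0.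
  by move: wk; rewrite e wj.
case: (ltngtP k w) => h.
- by rewrite low // mulr0 addr0.
- by rewrite mulr0 add0r.
- by rewrite mulr1 addr0 ws.
Qed.

Lemma converse (phi : {linear rV -> rV}) (theta : rV) (s : K) (t : 'I_n -> K) w :
  n = w.*2.+1 -> (forall a, phi a = a) -> s ^+ 2 = n%:R ->
  theta = s *: xpow w + \sum_(j < n | (w < j)%N) t j *: xpow j ->
  extended_structure phi theta.
Proof.
move=> Hn Hid Hs Ht.
split.
- split => [a b|||a]; rewrite ?Hid //.
  move=> a; have -> : tmap phi phi (Delta a) = tmap id id (Delta a).
    by apply: eq_bigr => i _; apply: eq_bigr => j _; rewrite !Hid.
  by rewrite tmap_id Hid.
- by move=> a; rewrite !Hid.
- by move=> a; rewrite Hid.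
have hn : (0 < n)%N by rewrite Hn.
have -> : tm (tmap phi id Delta1) = rho ('X^(n.-1)) *+ n.
  rewrite tmapD1 tm_sum -[X in _ = _ *+ X](card_ord n) -sumr_const; apply: eq_bigr => i _.
  rewrite Hid tm_tensor !xpowE tmulE -exprD subnKC //.
  by rewrite -ltnS prednK.
set Q := \sum_(j < n | (w < j)%N) t j *: 'X^(j - w.+1).
have eP : theta = rho ('X^w * (s%:P + 'X * Q)).
  rewrite Ht mulrDr rhoD mulrC mul_polyC rhoZ xpowE; congr (_ + _).
  rewrite /Q !mulr_sumr rho_sum; apply: eq_bigr => j wj.
  by rewrite -scalerAr -scalerAr mulrA -exprSr -exprD subnKC // xpowE rhoZ.
rewrite eP tmulE -expr2.
have -> : ('X^w * (s%:P + 'X * Q)) ^+ 2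
   = 'X^(w + w) * (s ^+ 2)%:P + 'X^((w + w).+1) * (2%:R * s%:P * Q + 'X * Q ^+ 2).
  by rewrite polyC_exp (exprS 'X (w + w)) exprD; ring.
rewrite rhoD [X in _ + X]rhoXn_ge; last by rewrite Hn addnn.
rewrite addr0 addnn.
have -> : w.*2 = n.-1 by rewrite Hn.
by rewrite mulrC mul_polyC rhoZ Hs scaler_nat.
Qed.

End Infra.

Theorem mainTheorem4 (K : closedFieldType) (n : nat) :
  [pchar K] =i pred0 -> (2 <= n)%N ->
  (~~ odd n ->
     forall (phi : {linear 'rV[K]_n -> 'rV[K]_n}) (theta : 'rV[K]_n),
       ~ extended_structure phi theta) /\
  (odd n ->
     forall (phi : {linear 'rV[K]_n -> 'rV[K]_n}) (theta : 'rV[K]_n),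
       extended_structure phi theta <->
       ((forall a, phi a = a) /\
        exists (s : K) (t : 'I_n -> K),
          s ^+ 2 = n%:R /\
          theta = s *: xpow n./2 + \sum_(j < n | (n./2 < j)%N) t j *: xpow j)).
Proof.
move=> chr n2; split.
  move=> ev phi theta [[Hm H1 _ He] Hinv Hth H3].
  by rewrite (@forward_odd _ _ phi theta n2 chr Hm H1 He H3) in ev.
move=> od phi theta; split.
  move=> [[Hm H1 _ He] Hinv Hth H3].
  have [Hid [w [Hn Tw2 Tlow]]] := @forward_all _ _ phi theta n2 chr Hm H1 He H3 Hinv Hth.
  have hw : n./2 = w by rewrite Hn /= uphalf_double.
  split => //; exists (sig _ n theta)`_w, (fun j => theta 0 j); split => //.
  rewrite hw; apply: row_form => k hk.
    by rewrite -sig_coef Tlow.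
  by rewrite -sig_coef hk.
move=> [Hid [s [t [Hs Ht]]]].
have [w Hn] : exists w, n = w.*2.+1.
  by exists n./2; rewrite -[n in LHS]odd_double_half od.
apply: (@converse _ _ phi theta s t _ Hn Hid Hs).
have hw : n./2 = w by rewrite Hn /= uphalf_double.
by rewrite Ht hw.
Qed.
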